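(* Let $R$ be a ring. Any finite direct sum of subinjective extension-reflecting right $R$-modules is subinjective extension-reflecting, and any finite direct sum of subprojective extension-reflecting right $R$-modules is subprojective extension-reflecting.
   Context: For modules $X,Y$, $X\in \underline{\mathfrak{In}}^{-1}(Y)$ means: for every module $C$ containing $X$ as a submodule, every homomorphism $X\to Y$ extends to $C\to Y$; $X\in \underline{\mathfrak{Pr}}^{-1}(Y)$ means: for every epimorphism $g\colon B\to X$ and every homomorphism $f\colon Y\to X$ there exists $h\colon Y\to B$ with $gh=f$. $M$ is subinjective extension-reflecting if for every short exact sequence $0\to A\to B\to C\to 0$ of right $R$-modules, $M\in \underline{\mathfrak{In}}^{-1}(A)\cap \underline{\mathfrak{In}}^{-1}(C)$ implies $M\in \underline{\mathfrak{In}}^{-1}(B)$; subprojective extension-reflecting is defined the same way with $\underline{\mathfrak{Pr}}^{-1}$. *)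

(* Defs.v *)
(* Right R-modules are modelled as left modules over the
   converse ring R^c (lmodType R^c); homomorphisms are {linear _ -> _}. *)
From HB Require Import structures.
From mathcomp Require Import all_boot all_order all_algebra.
Set Implicit Arguments. Unset Strict Implicit. Unset Printing Implicit Defensive.
Import GRing.Theory.
Local Open Scope ring_scope.

Section ModDefs.
Variable R : pzRingType.

Notation rmod := (lmodType R^c).

Definition InInv (X Y : rmod) : Prop :=
  forall (C : rmod) (i : {linear X -> C}), injective i ->
  forall f : {linear X -> Y}, exists g : {linear C -> Y}, forall x, g (i x) = f x.

Definition PrInv (X Y : rmod) : Prop :=
  forall (B : rmod) (g : {linear B -> X}), (forall x, exists b, g b = x) ->
  forall f : {linear Y -> X}, exists h : {linear Y -> B}, forall y, g (h y) = f y.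

Definition short_exact (A B C : rmod) (f : {linear A -> B}) (g : {linear B -> C})
  : Prop :=
  [/\ injective f, (forall c, exists b, g b = c) &
      (forall b, g b = 0 <-> exists a, f a = b)].

Definition subinj_ext_refl (M : rmod) : Prop :=
  forall (A B C : rmod) (f : {linear A -> B}) (g : {linear B -> C}),
  short_exact f g -> InInv M A -> InInv M C -> InInv M B.

Definition subproj_ext_refl (M : rmod) : Prop :=
  forall (A B C : rmod) (f : {linear A -> B}) (g : {linear B -> C}),
  short_exact f g -> PrInv M A -> PrInv M C -> PrInv M B.

Definition is_direct_sum (n : nat) (M : 'I_n -> rmod) (D : rmod) : Prop :=
  exists (inj : forall i, {linear M i -> D}) (proj : forall i, {linear D -> M i}),
  [/\ (forall i x, proj i (inj i x) = x),
      (forall i j (x : M i), i != j -> proj j (inj i x) = 0) &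
      (forall d, \sum_(i < n) inj i (proj i d) = d)].

End ModDefs.

(* Main.v *)
Require Import Defs.
From HB Require Import structures.
From mathcomp Require Import all_boot all_order all_algebra.
From mathcomp Require Import generic_quotient.
From Stdlib Require Import ClassicalEpsilon.
Set Implicit Arguments. Unset Strict Implicit. Unset Printing Implicit Defensive.
Import GRing.Theory.
Local Open Scope ring_scope.
Local Open Scope quotient_scope.

Section S.
Variable R : pzRingType.
Notation rmod := (lmodType R^c).

Definition mkLin (U V : rmod) (f : U -> V) (H : linear f) : {linear U -> V} :=
  HB.pack f (GRing.isLinear.Build R^c U V *:%R f H).

Lemma mkLinE (U V : rmod) (f : U -> V) (H : linear f) x : mkLin H x = f x.
Proof. reflexivity. Qed.


Section Quot.
Variables (D C : rmod) (phi : {linear D -> C}).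
Definition qrelP (x y : C) := exists d, x - y = phi d.
Definition qrel (x y : C) : bool :=
  if excluded_middle_informative (qrelP x y) then true else false.
Lemma qrelE x y : qrel x y <-> qrelP x y.
Proof. rewrite /qrel; case: excluded_middle_informative => //. Qed.
Lemma qrel_refl : reflexive qrel.
Proof. move=> x; apply/qrelE; exists 0; by rewrite subrr linear0. Qed.
Lemma qrel_sym : symmetric qrel.
Proof.
move=> x y; apply/idP/idP => /qrelE [d Hd]; apply/qrelE; exists (-d);
  by rewrite linearN -Hd opprB.
Qed.
Lemma qrel_trans : transitive qrel.
Proof.
move=> y x z /qrelE [d Hd] /qrelE [d' Hd']; apply/qrelE; exists (d + d').
by rewrite linearD -Hd -Hd' addrA subrK.
Qed.
Canonical qrel_equiv := EquivRel qrel qrel_refl qrel_sym qrel_trans.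
Definition Q := {eq_quot qrel_equiv}.
HB.instance Definition _ := EqQuotient.copy Q {eq_quot qrel_equiv}.
HB.instance Definition _ := Choice.copy Q {eq_quot qrel_equiv}.

Notation pi := (\pi_Q).
Lemma pi_eq (x y : C) : pi x = pi y <-> qrelP x y.
Proof. split => [/eqquotP/qrelE //|/qrelE H]; exact/eqquotP. Qed.
Lemma piK (x : C) : qrelP (repr (pi x)) x.
Proof. apply/pi_eq; by rewrite reprK. Qed.
Lemma piK' (x : C) : qrelP x (repr (pi x)).
Proof. apply/pi_eq; by rewrite reprK. Qed.

Lemma qind (P : Q -> Prop) : (forall x, P (pi x)) -> forall a, P a.
Proof. exact: quotW. Qed.

Definition qzero : Q := pi 0.
Definition qadd (a b : Q) : Q := pi (repr a + repr b).
Definition qopp (a : Q) : Q := pi (- repr a).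
Definition qscale (r : R^c) (a : Q) : Q := pi (r *: repr a).

Lemma piD x y : pi (x + y) = qadd (pi x) (pi y).
Proof.
apply/pi_eq; have [d Hd] := piK' x; have [d' Hd'] := piK' y.
exists (d + d'); by rewrite opprD addrACA Hd Hd' linearD.
Qed.
Lemma piN x : pi (- x) = qopp (pi x).
Proof.
apply/pi_eq; have [d Hd] := piK' x.
exists (- d); by rewrite -opprD Hd linearN.
Qed.
Lemma piZ r x : pi (r *: x) = qscale r (pi x).
Proof.
apply/pi_eq; have [d Hd] := piK' x.
exists (r *: d); by rewrite -scalerBr Hd linearZ.
Qed.

Lemma qaddA : associative qadd.
Proof. move=> a b c; elim/qind: a => x; elim/qind: b => y; elim/qind: c => z; by rewrite -!piD addrA. Qed.
Lemma qaddC : commutative qadd.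
Proof. move=> a b; elim/qind: a => x; elim/qind: b => y; by rewrite -!piD addrC. Qed.
Lemma qadd0 : left_id qzero qadd.
Proof. move=> a; elim/qind: a => x; by rewrite /qzero -!piD add0r. Qed.
Lemma qaddN : left_inverse qzero qopp qadd.
Proof. move=> a; elim/qind: a => x; by rewrite /qzero -piN -!piD addNr. Qed.
HB.instance Definition _ := GRing.isZmodule.Build Q qaddA qaddC qadd0 qaddN.

Lemma qaddE (a b : Q) : a + b = qadd a b. Proof. by []. Qed.
Lemma qscaleA a b v : qscale a (qscale b v) = qscale (a * b) v.
Proof. by elim/qind: v => x; rewrite -!piZ scalerA. Qed.
Lemma qscale1 : left_id 1 qscale.
Proof. move=> a; elim/qind: a => x; by rewrite -!piZ scale1r. Qed.
Lemma qscaleDr : right_distributive qscale +%R.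
Proof. move=> a u v; elim/qind: u => x; elim/qind: v => y; by rewrite !qaddE -(piD x y) -(piZ a x) -(piZ a y) -(piZ a (x+y)) -(piD (a*:x) (a*:y)) scalerDr. Qed.
Lemma qscaleDl v : {morph qscale^~ v: a b / a + b}.
Proof. move=> a b; elim/qind: v => x; by rewrite !qaddE -(piZ a x) -(piZ b x) -(piZ (a+b) x) -(piD (a*:x) (b*:x)) scalerDl. Qed.
HB.instance Definition _ := GRing.Zmodule_isLmodule.Build R^c Q qscaleA qscale1 qscaleDr qscaleDl.

Lemma pi_linear : linear pi.
Proof. move=> r x y; by rewrite piD piZ. Qed.
Definition piL : {linear C -> Q} := mkLin pi_linear.
Lemma piL0 d : piL (phi d) = 0.
Proof. apply/pi_eq; exists d; by rewrite subr0. Qed.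
Lemma piL_eq x y : piL x = piL y <-> qrelP x y.
Proof. exact: pi_eq. Qed.
End Quot.

Section Ker.
Variables (B X : rmod) (k : {linear B -> X}).
Definition K := {b : B | k b == 0}.
HB.instance Definition _ := Choice.on K.
Lemma k0 : k 0 == 0. Proof. by rewrite linear0. Qed.
Definition kzero : K := exist (fun b => k b == 0) 0 k0.
Lemma kaddP (a b : K) : k (val a + val b) == 0.
Proof. by rewrite linearD (eqP (valP a)) (eqP (valP b)) addr0. Qed.
Definition kadd (a b : K) : K := exist (fun b => k b == 0) _ (kaddP a b).
Lemma koppP (a : K) : k (- val a) == 0.
Proof. by rewrite linearN (eqP (valP a)) oppr0. Qed.
Definition kopp (a : K) : K := exist (fun b => k b == 0) _ (koppP a).
Lemma kscaleP r (a : K) : k (r *: val a) == 0.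
Proof. by rewrite linearZ_LR (eqP (valP a)) scaler0. Qed.
Definition kscale r (a : K) : K := exist (fun b => k b == 0) _ (kscaleP r a).
Lemma kaddA : associative kadd.
Proof. by move=> a b c; apply: val_inj; rewrite /= addrA. Qed.
Lemma kaddC : commutative kadd.
Proof. by move=> a b; apply: val_inj; rewrite /= addrC. Qed.
Lemma kadd0 : left_id kzero kadd.
Proof. by move=> a; apply: val_inj; rewrite /= add0r. Qed.
Lemma kaddN : left_inverse kzero kopp kadd.
Proof. by move=> a; apply: val_inj; rewrite /= addNr. Qed.
HB.instance Definition _ := GRing.isZmodule.Build K kaddA kaddC kadd0 kaddN.
Lemma kscaleA a b v : kscale a (kscale b v) = kscale (a * b) v.
Proof. by apply: val_inj; rewrite /= scalerA. Qed.
Lemma kscale1 : left_id 1 kscale.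
Proof. by move=> a; apply: val_inj; rewrite /= scale1r. Qed.
Lemma kscaleDr : right_distributive kscale +%R.
Proof. by move=> a u v; apply: val_inj; rewrite /= scalerDr. Qed.
Lemma kscaleDl v : {morph kscale^~ v: a b / a + b}.
Proof. by move=> a b; apply: val_inj; rewrite /= scalerDl. Qed.
HB.instance Definition _ := GRing.Zmodule_isLmodule.Build R^c K kscaleA kscale1 kscaleDr kscaleDl.
Lemma kval_linear : linear (fun x : K => val x).
Proof. by []. Qed.
Definition kval : {linear K -> B} := mkLin kval_linear.
Lemma kvalP (x : K) : k (kval x) = 0.
Proof. exact/eqP/(valP x). Qed.
Definition kin (b : B) (H : k b = 0) : K := exist (fun b => k b == 0) b (introT eqP H).
Lemma kinE b H : kval (@kin b H) = b. Proof. by []. Qed.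
End Ker.

Lemma linD (U V : rmod) (f h : U -> V) : linear f -> linear h -> linear (fun x => f x + h x).
Proof. by move=> Hf Hh a x y; rewrite Hf Hh scalerDr addrACA. Qed.
Lemma linB (U V : rmod) (f h : U -> V) : linear f -> linear h -> linear (fun x => f x - h x).
Proof. by move=> Hf Hh a x y; rewrite Hf Hh scalerBr opprD addrACA. Qed.

Section Main.
Variables (n : nat) (M : 'I_n -> rmod) (D : rmod)
  (inj : forall i, {linear M i -> D}) (proj : forall i, {linear D -> M i})
  (Hpi : forall i x, proj i (inj i x) = x)
  (Hpo : forall i j (x : M i), i != j -> proj j (inj i x) = 0)
  (Hsum : forall d, \sum_(i < n) inj i (proj i d) = d).

Lemma In_summand (Y : rmod) : InInv D Y -> forall i, InInv (M i) Y.
Proof.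
move=> HD i C j jinj f.
pose e := fun d : D => (j (proj i d), d - inj i (proj i d)) : (C * D)%type.
have eL : linear e.
  move=> a x y; rewrite /e !linearP /=; congr (_, _).
  by rewrite /= scalerBr scalerN [RHS]addrACA.
have einj : injective e.
  move=> x y [] /jinj Hp Hd.
  by move: Hd; rewrite Hp => /addIr.
have fL : linear (fun d => f (proj i d)) by move=> a x y; rewrite !linearP.
have [g' Hg'] := HD _ (mkLin eL) einj (mkLin fL).
have gL : linear (fun c : C => g' (c, 0)).
  move=> a x y; rewrite -linearP; congr (g' _).
  by congr (_, _); rewrite /= ?scaler0 ?addr0.
exists (mkLin gL) => x; rewrite mkLinE.
have He : e (inj i x) = (j x, 0) by rewrite /e Hpi subrr.
by rewrite -He (Hg' (inj i x)) /= Hpi.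
Qed.

Lemma In_sum (Y : rmod) : (forall i, InInv (M i) Y) -> InInv D Y.
Proof.
move=> HM C j jinj f.
have phiL : forall i, linear (fun d => j (d - inj i (proj i d))).
  move=> i a x y; rewrite -linearP; congr (j _).
  by rewrite !linearD !linearZ_LR scalerBr scalerN [RHS]addrACA.
pose phi i := mkLin (phiL i).
have eL : forall i, linear (fun x : M i => piL (phi i) (j (inj i x))).
  by move=> i a x y; rewrite !linearP.
have einj : forall i, injective (mkLin (eL i)).
  move=> i x y; rewrite !mkLinE => /piL_eq [d]; rewrite mkLinE -linearB => /jinj Hd.
  have := congr1 (proj i) Hd; rewrite !linearB /= !Hpi subrr => /eqP.
  by rewrite subr_eq0 => /eqP.
have fL : forall i, linear (fun x : M i => f (inj i x)).
  by move=> i a x y; rewrite !linearP.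
have G : forall i, {g : {linear Q (phi i) -> Y} | forall x, g (mkLin (eL i) x) = mkLin (fL i) x}.
  move=> i; apply: constructive_indefinite_description; exact: HM.
have gL : linear (fun c => \sum_i sval (G i) (piL (phi i) c)).
  move=> a x y; rewrite scaler_sumr -big_split; apply: eq_bigr => i _; by rewrite !linearP.
exists (mkLin gL) => d; rewrite mkLinE.
have Hi : forall i, piL (phi i) (j d) = piL (phi i) (j (inj i (proj i d))).
  move=> i; apply/piL_eq; exists d; by rewrite mkLinE -linearB.
rewrite -{2}[d]Hsum linear_sum; apply: eq_bigr => i _.
rewrite Hi; have := svalP (G i) (proj i d); rewrite !mkLinE => <-.
by [].
Qed.

Lemma Pr_summand (Y : rmod) : PrInv D Y -> forall i, PrInv (M i) Y.
Proof.
move=> HD i B g gsurj f.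
have g'L : linear (fun p : (B * D)%type => inj i (g p.1) + (p.2 - inj i (proj i p.2))).
  apply: linD; first by move=> a p q; rewrite /= !linearP.
  apply: linB; first by [].
  by move=> a p q; rewrite /= !linearP.
have g'surj : forall d, exists p, mkLin g'L p = d.
  move=> d; have [b Hb] := gsurj (proj i d); exists (b, d).
  by rewrite mkLinE /= Hb addrC subrK.
have fL : linear (fun y => inj i (f y)) by move=> a x y; rewrite !linearP.
have [h' Hh'] := HD _ (mkLin g'L) g'surj (mkLin fL).
have hL : linear (fun y => (h' y).1) by move=> a x y; rewrite linearP.
exists (mkLin hL) => y; rewrite mkLinE.
have := congr1 (proj i) (Hh' y); rewrite !mkLinE /= linearD linearB /= !Hpi subrr addr0.
by [].
Qed.

Lemma Pr_sum (Y : rmod) : (forall i, PrInv (M i) Y) -> PrInv D Y.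
Proof.
move=> HM B g gsurj f.
have kL : forall i, linear (fun b => g b - inj i (proj i (g b))).
  move=> i; apply: linB; first by move=> a x y; rewrite linearP.
  by move=> a x y; rewrite !linearP.
pose k i := mkLin (kL i).
have giL : forall i, linear (fun s : K (k i) => proj i (g (kval (k i) s))).
  by move=> i a x y; rewrite !linearP.
have gisurj : forall i x, exists s, mkLin (giL i) s = x.
  move=> i x; have [b Hb] := gsurj (inj i x).
  have Hk : k i b = 0 by rewrite mkLinE Hb Hpi subrr.
  by exists (kin Hk); rewrite mkLinE kinE Hb Hpi.
have fL : forall i, linear (fun y => proj i (f y)).
  by move=> i a x y; rewrite !linearP.
have H : forall i, {h : {linear Y -> K (k i)} | forall y, mkLin (giL i) (h y) = mkLin (fL i) y}.
  move=> i; apply: constructive_indefinite_description; exact: HM.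
have hL : linear (fun y => \sum_i kval (k i) (sval (H i) y)).
  move=> a x y; rewrite scaler_sumr -big_split; apply: eq_bigr => i _; by rewrite !linearP.
exists (mkLin hL) => y; rewrite mkLinE linear_sum -[RHS]Hsum; apply: eq_bigr => i _.
have := kvalP (sval (H i) y); rewrite mkLinE => /eqP; rewrite subr_eq0 => /eqP ->.
by have := svalP (H i) y; rewrite !mkLinE => ->.
Qed.

End Main.
End S.

Theorem mainTheorem16 (R : pzRingType) :
  (forall (n : nat) (M : 'I_n -> lmodType R^c) (D : lmodType R^c),
     is_direct_sum M D -> (forall i, subinj_ext_refl (M i)) -> subinj_ext_refl D) /\
  (forall (n : nat) (M : 'I_n -> lmodType R^c) (D : lmodType R^c),
     is_direct_sum M D -> (forall i, subproj_ext_refl (M i)) -> subproj_ext_refl D).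
Proof.
split.
- move=> n M D [inj [proj [Hpi Hpo Hsum]]] Hi A B C f g Hex HA HC.
  apply: (In_sum Hpi Hsum) => i.
  apply: (Hi i A B C f g Hex).
  + exact: (In_summand Hpi HA).
  + exact: (In_summand Hpi HC).
- move=> n M D [inj [proj [Hpi Hpo Hsum]]] Hi A B C f g Hex HA HC.
  apply: (Pr_sum Hpi Hsum) => i.
  apply: (Hi i A B C f g Hex).
  + exact: (Pr_summand Hpi HA).
  + exact: (Pr_summand Hpi HC).
Qed.
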